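(* Let $E^W_0=0$. The generating function for the expected number of napkinless diners under algorithm $W$ is \[ \sum_{n\ge 0}E^W_n z^n=\frac{z^3(2-z)}{2(1-z)^2(2+z)}, \] and for every $n\ge 0$, \[ E^W_{n+3}=\frac{(3n+7)2^{n-1}+(-1)^n}{9\cdot 2^n}. \]
   Context: Seating model. A circular table has $n\ge 1$ seats, with exactly one napkin between each pair of adjacent seats ($n$ napkins in total). ''Left'' and ''right'' are from the perspective of a seated diner. Diners $1,\dots,n$ arrive in this order and a maitre d' chooses a seat for each. A preference order is $\sigma=(\sigma_1,\dots,\sigma_n)\in\{-1,1\}^n$, where $\sigma_j=+1$ means diner $j$ prefers the napkin on their right and $\sigma_j=-1$ the napkin on their left. When diner $j$ is seated, they take their preferred adjacent napkin if it is still on the table; otherwise the other adjacent napkin if still on the table; otherwise they are napkinless. The maitre d' observes which napkin each seated diner takes. The ''previous diner'' means the most recently seated diner. Algorithm $W$ (trap setting). Seat diner 1; the primary direction $d\in\{\text{left},\text{right}\}$ is the side of the napkin diner 1 takes. All movement below is in direction $d$. (W1) If the two seats at distance 1 and 2 in direction $d$ from the previous diner's seat are both empty, go to W2; otherwise go to W4. (W2) If the previous diner took the napkin on their side $d$, seat the next diner two seats in direction $d$ from the previous diner and return to W1; otherwise go to W3. (W3) Seat the next diner one seat in direction $d$ from the previous diner and return to W1. (W4) Seat all remaining diners, one at a time in order of arrival, in the empty seats, in the order in which these seats are encountered moving in direction $d$ starting from diner 1's seat. For $n\ge1$, $\nu_W(\sigma)$ is the number of napkinless diners when the $n$ diners with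 preference order $\sigma$ are seated at the circular table with $n$ seats by algorithm $W$, and $E^W_n=2^{-n}\sum_{\sigma\in\{-1,1\}^n}\nu_W(\sigma)$ is its expectation for uniformly random $\sigma$. *)

(* Defs.v *)
From Stdlib Require Import Reals Arith List ZArith.
From Coquelicot Require Import Coquelicot.
Import ListNotations.
Open Scope R_scope.

(* Seats 0..n-1 around the table; napkin i lies between seat i and seat i+1
   (mod n).  Direction "right" (bool true) means increasing seat index; the
   napkin on the right of the diner at seat p is napkin p, the one on the left
   is napkin p-1 (mod n).  A preference true = +1 (right), false = -1 (left). *)

Definition upd (f : nat -> bool) (i : nat) : nat -> bool :=
  fun j => if Nat.eqb j i then true else f j.

(* Diner with preference b sits at seat p; returns the new napkin state and
   the side of the napkin taken (Some true = right, Some false = left,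
   None = napkinless). *)
Definition take_napkin (n : nat) (nap : nat -> bool) (p : nat) (b : bool)
  : (nat -> bool) * option bool :=
  let r := (p mod n)%nat in
  let l := ((p + n - 1) mod n)%nat in
  let pref := if b then r else l in
  let oth := if b then l else r in
  if negb (nap pref) then (upd nap pref, Some b)
  else if negb (nap oth) then (upd nap oth, Some (negb b))
  else (nap, None).

Definition move (n : nat) (d : bool) (p k : nat) : nat :=
  if d then ((p + k) mod n)%nat else ((p + (n - k mod n)) mod n)%nat.

Fixpoint find_empty (n : nat) (d : bool) (occ : nat -> bool) (k fuel : nat)
  : nat :=
  match fuel with
  | O => O
  | S f => let q := move n d 0 k in
           if occ q then find_empty n d occ (S k) f else q
  end.

(* Seat diners 2,3,... with preferences sigma by algorithm W.
   prev = previous diner's seat, prevd = previous diner took the napkin on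
   side d, w4 = step W4 has been reached. *)
Fixpoint runW (n : nat) (d : bool) (occ nap : nat -> bool) (prev : nat)
  (prevd w4 : bool) (sigma : list bool) : nat :=
  match sigma with
  | [] => O
  | b :: rest =>
      let both_empty := andb (negb (occ (move n d prev 1))) (negb (occ (move n d prev 2))) in
      let w4' := orb w4 (negb both_empty) in
      let p := if w4' then find_empty n d occ 0 n
               else if prevd then move n d prev 2 else move n d prev 1 in
      let (nap', side) := take_napkin n nap p b in
      let miss := match side with None => 1%nat | Some _ => 0%nat end in
      let pd := match side with Some s => Bool.eqb s d | None => false end in
      (miss + runW n d (upd occ p) nap' p pd w4' rest)%nat
  end.

Definition nuW (n : nat) (sigma : list bool) : nat :=
  match sigma with
  | [] => O
  | b :: rest =>
      let (nap1, side) := take_napkin n (fun _ => false) 0 b in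
      let miss := match side with None => 1%nat | Some _ => 0%nat end in
      let d := match side with Some s => s | None => b end in
      (miss + runW n d (upd (fun _ => false) 0) nap1 0 true false rest)%nat
  end.

Fixpoint all_prefs (n : nat) : list (list bool) :=
  match n with
  | O => [[]]
  | S k => flat_map (fun l => [true :: l; false :: l]) (all_prefs k)
  end.

(* E^W_n; note E^W_0 = 0 (the single empty order seats nobody). *)
Definition EW (n : nat) : R :=
  fold_right Rplus 0 (map (fun s => INR (nuW n s)) (all_prefs n)) / 2 ^ n.

(* Main.v *)
Require Import Defs.
From Stdlib Require Import Reals Arith List ZArith.
From Coquelicot Require Import Coquelicot.
Open Scope R_scope.
From Stdlib Require Import Lia Bool Lra.
Import ListNotations.
Open Scope nat_scope.

Lemma mod_hi n x : n <= x < 2 * n -> x mod n = x - n.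
Proof.
  intros H. replace x with ((x - n) + 1 * n) at 1 by lia.
  rewrite Nat.Div0.mod_add. apply Nat.mod_small. lia.
Qed.

Definition nk n (d : bool) k := if d then k mod n else move n false 0 (S k).

Lemma posT n k : k < n -> move n true 0 k = k.
Proof. intros; unfold move; simpl; apply Nat.mod_small; lia. Qed.

Lemma posF n k : k < n -> move n false 0 k = if k =? 0 then 0 else n - k.
Proof.
  intros H; unfold move; simpl. rewrite (Nat.mod_small k) by lia.
  destruct (k =? 0) eqn:E.
  - apply Nat.eqb_eq in E; subst. rewrite Nat.sub_0_r. apply Nat.Div0.mod_same.
  - apply Nat.eqb_neq in E. apply Nat.mod_small. lia.
Qed.

Lemma pos_lt n d k : 0 < n -> move n d 0 k < n.
Proof. intros; unfold move; destruct d; apply Nat.mod_upper_bound; lia. Qed.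

Lemma pos_inj n d k j : k < n -> j < n -> move n d 0 k = move n d 0 j -> k = j.
Proof.
  intros Hk Hj. destruct d.
  - rewrite !posT by lia. auto.
  - rewrite !posF by lia. destruct (k =? 0) eqn:E1, (j =? 0) eqn:E2;
    rewrite ?Nat.eqb_eq, ?Nat.eqb_neq in *; lia.
Qed.

Lemma nkT n k : k < n -> nk n true k = k.
Proof. intros; unfold nk; apply Nat.mod_small; lia. Qed.

Lemma nkF n k : k < n -> nk n false k = n - 1 - k.
Proof.
  intros H; unfold nk, move. simpl.
  destruct (Nat.eq_dec (S k) n).
  - rewrite e, Nat.Div0.mod_same, Nat.sub_0_r, Nat.Div0.mod_same. lia.
  - rewrite (Nat.mod_small (S k)) by lia. rewrite Nat.mod_small by lia. lia.
Qed.

Lemma nk_inj n d k j : k < n -> j < n -> nk n d k = nk n d j -> k = j.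
Proof.
  intros Hk Hj. destruct d.
  - rewrite !nkT by lia. auto.
  - rewrite !nkF by lia. lia.
Qed.

Lemma mv n d p j : p < n -> p + j < n -> move n d (move n d 0 p) j = move n d 0 (p + j).
Proof.
  intros H1 H2. destruct d.
  - rewrite posT by lia. rewrite posT by lia. unfold move. apply Nat.mod_small; lia.
  - rewrite posF by lia. rewrite (posF n (p+j)) by lia. unfold move.
    rewrite (Nat.mod_small j) by lia.
    destruct (p =? 0) eqn:E1; rewrite ?Nat.eqb_eq, ?Nat.eqb_neq in *.
    + subst. simpl. destruct (j =? 0) eqn:E2; rewrite ?Nat.eqb_eq, ?Nat.eqb_neq in *.
      * subst. rewrite Nat.sub_0_r. apply Nat.Div0.mod_same.
      * apply Nat.mod_small; lia.
    + replace (p + j =? 0) with false by (symmetry; apply Nat.eqb_neq; lia).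
      rewrite mod_hi by lia. lia.
Qed.

Lemma mv_wrap n d p j : 0 < n -> p < n -> p + j = n -> move n d (move n d 0 p) j = 0.
Proof.
  intros H0 H1 H2. destruct (Nat.eq_dec p 0).
  { subst p. simpl in H2. subst n. destruct d; unfold move; simpl.
    - rewrite Nat.Div0.mod_0_l. simpl. apply Nat.Div0.mod_same.
    - repeat (rewrite ?Nat.Div0.mod_0_l, ?Nat.Div0.mod_same, ?Nat.sub_0_r, ?Nat.add_0_l, ?Nat.sub_diag); reflexivity. }
  assert (H3 : j < n) by lia. destruct d.
  - rewrite posT by lia. unfold move. rewrite H2. apply Nat.Div0.mod_same.
  - rewrite posF by lia. unfold move. rewrite (Nat.mod_small j) by lia.
    destruct (p =? 0) eqn:E1; rewrite ?Nat.eqb_eq, ?Nat.eqb_neq in *.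
    + lia.
    + rewrite mod_hi by lia. lia.
Qed.

Lemma seat_r n d j : 1 <= j < n ->
  (move n d 0 j) mod n = if d then nk n d j else nk n d (j - 1).
Proof.
  intros H. destruct d.
  - rewrite posT, nkT by lia. apply Nat.mod_small; lia.
  - rewrite posF, nkF by lia. replace (j =? 0) with false by (symmetry; apply Nat.eqb_neq; lia).
    rewrite Nat.mod_small; lia.
Qed.

Lemma seat_l n d j : 1 <= j < n ->
  (move n d 0 j + n - 1) mod n = if d then nk n d (j - 1) else nk n d j.
Proof.
  intros H. destruct d.
  - rewrite posT, nkT by lia. rewrite mod_hi; lia.
  - rewrite posF, nkF by lia. replace (j =? 0) with false by (symmetry; apply Nat.eqb_neq; lia).
    rewrite mod_hi; lia.
Qed.

Lemma seat0 n d : 0 < n -> move n d 0 0 = 0 /\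
   (if d then 0 mod n else (0 + n - 1) mod n) = nk n d 0 /\
   (if d then (0 + n - 1) mod n else 0 mod n) = nk n d (n - 1).
Proof.
  intros H. destruct d.
  - rewrite posT, !nkT by lia. rewrite Nat.Div0.mod_0_l. split; auto. split; auto.
    apply Nat.mod_small; lia.
  - rewrite posF, !nkF by lia. simpl. rewrite Nat.sub_0_r, Nat.Div0.mod_0_l.
    split; auto. split. apply Nat.mod_small; lia. lia.
Qed.

Lemma take_rel n d nap j b : 1 <= j < n ->
  take_napkin n nap (move n d 0 j) b =
  (let D := nk n d j in let O := nk n d (j - 1) in
   let pref := if Bool.eqb b d then D else O in
   let oth := if Bool.eqb b d then O else D in
   if negb (nap pref) then (upd nap pref, Some b)
   else if negb (nap oth) then (upd nap oth, Some (negb b))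
   else (nap, None)).
Proof.
  intros H. unfold take_napkin. rewrite seat_r, seat_l by lia.
  destruct b, d; reflexivity.
Qed.

Fixpoint cnt (n : nat) (f : nat -> nat) : nat :=
  match n with 0 => 0 | S m => cnt m f + f m end.

Lemma cnt_ext n f g : (forall j, j < n -> f j = g j) -> cnt n f = cnt n g.
Proof. induction n; simpl; intros H; auto. rewrite IHn, H; auto. Qed.

Lemma cnt_add n f g h : (forall j, j < n -> f j = g j + h j) -> cnt n f = cnt n g + cnt n h.
Proof. induction n; simpl; intros H; auto. rewrite IHn, H; auto; lia. Qed.

Lemma cnt_le n f g : (forall j, j < n -> f j <= g j) -> cnt n f <= cnt n g.
Proof. induction n; simpl; intros H; auto. specialize (IHn (fun j Hj => H j ltac:(lia))). specialize (H n ltac:(lia)). lia. Qed.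

Lemma cnt_indc n x c : x < n -> cnt n (fun j => if j =? x then c else 0) = c.
Proof.
  induction n; simpl; intros H. lia.
  destruct (Nat.eq_dec x n).
  - subst. rewrite Nat.eqb_refl.
    assert (cnt n (fun j => if j =? n then c else 0) = cnt n (fun _ => 0)) as ->.
    { apply cnt_ext. intros j Hj. destruct (j =? n) eqn:E; auto. apply Nat.eqb_eq in E; lia. }
    clear. induction n; simpl; lia.
  - rewrite IHn by lia. replace (n =? x) with false. lia. symmetry; apply Nat.eqb_neq; lia.
Qed.

Lemma cnt_ind n x : x < n -> cnt n (fun j => if j =? x then 1 else 0) = 1.
Proof. apply cnt_indc. Qed.

Lemma cnt_pos n f : 0 < cnt n f -> exists j, j < n /\ 0 < f j.
Proof.
  induction n; simpl; intros H. lia.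
  destruct (f n) eqn:E.
  - destruct IHn as [j [Hj Hf]]. lia. exists j; split; auto.
  - exists n; split; lia.
Qed.

Definition emp n d (occ : nat -> bool) j := if occ (move n d 0 j) then 0 else 1.
Definition trap n d (occ nap : nat -> bool) j :=
  if occ (move n d 0 j) then 0
  else if nap (nk n d j) && nap (nk n d (j - 1)) then 1 else 0.

Lemma fe n d occ : forall fuel k,
  (exists j, k <= j < k + fuel /\ occ (move n d 0 j) = false) ->
  exists j, k <= j < k + fuel /\ occ (move n d 0 j) = false /\
            find_empty n d occ k fuel = move n d 0 j.
Proof.
  induction fuel; intros k [j [Hj Ho]]. lia.
  simpl. destruct (occ (move n d 0 k)) eqn:E.
  - destruct (IHfuel (S k)) as [j' [H1 [H2 H3]]].
    + exists j. split; auto. destruct (Nat.eq_dec j k). subst; congruence. lia.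
    + exists j'. split. lia. auto.
  - exists k. split. lia. auto.
Qed.

Lemma upd_occ n d occ j0 j : 0 < n -> j0 < n -> j < n ->
  upd occ (move n d 0 j0) (move n d 0 j) = if j =? j0 then true else occ (move n d 0 j).
Proof.
  intros. unfold upd. destruct (j =? j0) eqn:E.
  - apply Nat.eqb_eq in E; subst. rewrite Nat.eqb_refl. auto.
  - apply Nat.eqb_neq in E. destruct (Nat.eqb_spec (move n d 0 j) (move n d 0 j0)); auto.
    apply pos_inj in e; auto. lia.
Qed.

Lemma upd_nk n d nap j0 j : j0 < n -> j < n ->
  upd nap (nk n d j0) (nk n d j) = if j =? j0 then true else nap (nk n d j).
Proof.
  intros. unfold upd. destruct (j =? j0) eqn:E.
  - apply Nat.eqb_eq in E; subst. rewrite Nat.eqb_refl. auto.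
  - apply Nat.eqb_neq in E. destruct (Nat.eqb_spec (nk n d j) (nk n d j0)); auto.
    apply nk_inj in e; auto. lia.
Qed.

Lemma W4 n d : 0 < n -> forall s occ nap prev prevd,
  (forall j, j < n -> occ (move n d 0 j) = false -> 1 <= j /\ (S j < n -> occ (move n d 0 (S j)) = true)) ->
  length s = cnt n (emp n d occ) ->
  runW n d occ nap prev prevd true s = cnt n (trap n d occ nap).
Proof.
  intros Hn s. induction s as [|b s IH]; intros occ nap prev prevd Hiso Hlen.
  - simpl in *. symmetry. apply Nat.le_0_r. rewrite Hlen.
    apply cnt_le. intros j Hj. unfold trap, emp. destruct (occ _); auto. destruct (_ && _); auto.
  - simpl in Hlen. destruct (cnt_pos n (emp n d occ)) as [j1 [Hj1 Hf]]. lia.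
    destruct (fe n d occ n 0) as [j0 [Hj0 [Ho Hfe]]].
    { exists j1. split. lia. unfold emp in Hf. destruct (occ _); auto. lia. }
    simpl in Hj0. destruct (Hiso j0 ltac:(lia) Ho) as [Hj01 Hnext].
    simpl. rewrite Hfe. rewrite take_rel by lia.
    set (D := nk n d j0). set (O := nk n d (j0 - 1)).
    assert (Hemp : forall occ', (forall j, j < n -> occ' (move n d 0 j) = if j =? j0 then true else occ (move n d 0 j)) ->
       cnt n (emp n d occ) = S (cnt n (emp n d occ'))).
    { intros occ' Hocc. rewrite (cnt_add n (emp n d occ) (emp n d occ') (fun j => if j =? j0 then 1 else 0)).
      rewrite cnt_ind by lia. lia. intros j Hj. unfold emp. rewrite Hocc by auto.
      destruct (j =? j0) eqn:E. apply Nat.eqb_eq in E; subst. rewrite Ho. auto. lia. }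
    assert (Hiso' : forall occ', (forall j, j < n -> occ' (move n d 0 j) = if j =? j0 then true else occ (move n d 0 j)) ->
      forall j, j < n -> occ' (move n d 0 j) = false -> 1 <= j /\ (S j < n -> occ' (move n d 0 (S j)) = true)).
    { intros occ' Hocc j Hj Ho'. rewrite Hocc in Ho' by auto. destruct (j =? j0) eqn:E; try discriminate.
      destruct (Hiso j Hj Ho') as [A1 A2]. split; auto. intros HS. rewrite Hocc by auto.
      destruct (S j =? j0); auto. }
    assert (Hocc' : forall j, j < n -> upd occ (move n d 0 j0) (move n d 0 j) = if j =? j0 then true else occ (move n d 0 j)).
    { intros; apply upd_occ; lia. }
    assert (Htrap : forall nap', (forall j, j < n -> j <> j0 -> occ (move n d 0 j) = false ->
                    nap' (nk n d j) = nap (nk n d j) /\ nap' (nk n d (j - 1)) = nap (nk n d (j - 1))) ->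
       cnt n (trap n d occ nap) = cnt n (trap n d (upd occ (move n d 0 j0)) nap') + (if nap D && nap O then 1 else 0)).
    { intros nap' Hnap. rewrite (cnt_add n (trap n d occ nap) (trap n d (upd occ (move n d 0 j0)) nap')
          (fun j => if j =? j0 then (if nap D && nap O then 1 else 0) else 0)).
      rewrite cnt_indc by lia. lia.
      intros j Hj. unfold trap. rewrite Hocc' by auto. destruct (j =? j0) eqn:E.
      - apply Nat.eqb_eq in E; subst. rewrite Ho. fold D O. lia.
      - apply Nat.eqb_neq in E. destruct (occ (move n d 0 j)) eqn:Eo; auto.
        destruct (Hnap j Hj E Eo) as [N1 N2]. rewrite N1, N2. lia. }
    assert (Hdis : forall j, j < n -> j <> j0 -> occ (move n d 0 j) = false ->
       j <> j0 - 1 /\ j <> S j0 /\ j - 1 <> j0 /\ j - 1 <> j0 - 1).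
    { intros j Hj Hne Hoj. destruct (Hiso j Hj Hoj) as [B1 B2].
      assert (j <> S j0). { intro; subst. rewrite Hnext in Hoj by lia. discriminate. }
      assert (j <> j0 - 1). { intro; subst. replace (S (j0-1)) with j0 in * by lia. rewrite B2 in Ho by lia. discriminate. }
      lia. }
    assert (Hupd : forall X, X = D \/ X = O -> forall j, j < n -> j <> j0 -> occ (move n d 0 j) = false ->
       upd nap X (nk n d j) = nap (nk n d j) /\ upd nap X (nk n d (j - 1)) = nap (nk n d (j - 1))).
    { intros X HX j Hj Hne Hoj. destruct (Hdis j Hj Hne Hoj) as [C1 [C2 [C3 C4]]].
      destruct HX; subst X; unfold D, O; rewrite !upd_nk by lia;
      repeat match goal with |- context [?a =? ?b] => let E := fresh in destruct (a =? b) eqn:E; [apply Nat.eqb_eq in E; lia|] end; auto. }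
    destruct (Bool.eqb b d); simpl;
    destruct (nap D) eqn:ED; destruct (nap O) eqn:EO; simpl.
    all: rewrite (IH _ _ _ _ (Hiso' _ Hocc')) by (apply Hemp in Hocc'; lia).
    all: first [ rewrite (Htrap _ (fun j Hj Hne Hoj => Hupd _ (or_introl eq_refl) j Hj Hne Hoj)); simpl; lia
               | rewrite (Htrap _ (fun j Hj Hne Hoj => Hupd _ (or_intror eq_refl) j Hj Hne Hoj)); simpl; lia
               | rewrite (Htrap nap (fun j _ _ _ => conj eq_refl eq_refl)); simpl; lia ].
Qed.

Definition SL (L : list (list bool)) (f : list bool -> R) : R := fold_right Rplus 0%R (map f L).

Lemma SL_S k f : SL (all_prefs (S k)) f = SL (all_prefs k) (fun l => (f (true :: l) + f (false :: l))%R).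
Proof.
  unfold SL. simpl. generalize (all_prefs k). induction l; simpl; auto. rewrite <- IHl. lra.
Qed.

Lemma SL_ext L f g : (forall l, In l L -> f l = g l) -> SL L f = SL L g.
Proof. unfold SL. induction L; simpl; intros H; auto. rewrite H, IHL; auto. Qed.

Lemma SL_plus L f g : SL L (fun l => f l + g l)%R = (SL L f + SL L g)%R.
Proof. unfold SL. induction L; simpl. lra. rewrite IHL. lra. Qed.

Lemma SL_const k c : SL (all_prefs k) (fun _ => c) = (2 ^ k * c)%R.
Proof. induction k. unfold SL; simpl; lra. rewrite SL_S, SL_plus, IHk. simpl. lra. Qed.

Lemma all_prefs_len k l : In l (all_prefs k) -> length l = k.
Proof.
  revert l; induction k; simpl; intros l H.
  - destruct H as [<-|[]]; auto.
  - apply in_flat_map in H. destruct H as [x [Hx Hl]]. simpl in Hl.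
    destruct Hl as [<-|[<-|[]]]; simpl; f_equal; auto.
Qed.

Fixpoint GA (r : nat) : R :=
  match r with 0 => 0%R | S r1 => match r1 with 0 => 0%R | S r' => ((1 + GB r' + GA r') / 2)%R end end
with GB (r : nat) : R :=
  match r with 0 => 0%R | S r1 => match r1 with 0 => 0%R | S r' => ((GA r1 + GB r1) / 2)%R end end.

Definition G (b : bool) r := if b then GA r else GB r.

Definition Inv n d (occ nap : nat -> bool) p prevd :=
  p < n /\ occ (move n d 0 0) = true /\ occ (move n d 0 p) = true /\
  (forall j, p < j < n -> occ (move n d 0 j) = false) /\
  nap (nk n d p) = prevd /\
  (forall j, p < j < n -> nap (nk n d j) = false) /\
  (forall j, j <= p -> occ (move n d 0 j) = false -> 1 <= j /\ occ (move n d 0 (S j)) = true).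

Lemma runW_sw n d occ nap prev prevd b s :
  andb (negb (occ (move n d prev 1))) (negb (occ (move n d prev 2))) = false ->
  runW n d occ nap prev prevd false (b :: s) = runW n d occ nap prev prevd true (b :: s).
Proof. intros H. cbn -[move take_napkin upd find_empty]. rewrite H. reflexivity. Qed.

Lemma runW_step n d occ nap p prevd b l : 0 < n -> Inv n d occ nap p prevd -> p + 2 < n ->
  let q := if prevd then p + 2 else p + 1 in
  runW n d occ nap (move n d 0 p) prevd false (b :: l) =
  runW n d (upd occ (move n d 0 q)) (upd nap (if Bool.eqb b d then nk n d q else nk n d (q - 1)))
       (move n d 0 q) (Bool.eqb b d) false l.
Proof.
  intros Hn [I0 [I1 [I2 [I3 [I4 [I5 I6]]]]]] Hp q.
  cbn -[move take_napkin upd find_empty].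
  rewrite (mv n d p 1), (mv n d p 2) by lia.
  rewrite (I3 (p+1)), (I3 (p+2)) by lia. simpl.
  assert (Hq : 1 <= q < n) by (unfold q; destruct prevd; lia).
  replace (if prevd then move n d 0 (p + 2) else move n d 0 (p + 1)) with (move n d 0 q)
    by (unfold q; destruct prevd; reflexivity).
  rewrite take_rel by lia.
  assert (HD : nap (nk n d q) = false) by (apply I5; unfold q; destruct prevd; lia).
  assert (HO : nap (nk n d (q - 1)) = false).
  { unfold q in *; destruct prevd. apply I5; lia. replace (p + 1 - 1) with p by lia. auto. }
  destruct (Bool.eqb b d) eqn:E; simpl; rewrite ?HD, ?HO; simpl; rewrite ?E; reflexivity.
Qed.

Lemma step_facts n d occ nap p prevd b : 0 < n -> Inv n d occ nap p prevd -> p + 2 < n ->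
  let q := if prevd then p + 2 else p + 1 in
  let occ' := upd occ (move n d 0 q) in
  let nap' := upd nap (if Bool.eqb b d then nk n d q else nk n d (q - 1)) in
  Inv n d occ' nap' q (Bool.eqb b d) /\
  cnt n (emp n d occ) = S (cnt n (emp n d occ')) /\
  cnt n (trap n d occ' nap') = cnt n (trap n d occ nap) + (if prevd && negb (Bool.eqb b d) then 1 else 0).
Proof.
  intros Hn [I0 [I1 [I2 [I3 [I4 [I5 I6]]]]]] Hp q occ' nap'.
  assert (Hq : p < q < n /\ q <= p + 2 /\ (prevd = true -> q = p + 2) /\ (prevd = false -> q = p + 1))
    by (unfold q; destruct prevd; repeat split; intros; try discriminate; lia).
  set (X := if Bool.eqb b d then q else q - 1).
  assert (HX : X < n /\ (X = q \/ X = q - 1)) by (unfold X; destruct (Bool.eqb b d); lia).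
  assert (Hnap : forall j, j < n -> nap' (nk n d j) = if j =? X then true else nap (nk n d j)).
  { intros j Hj. unfold nap'. replace (if Bool.eqb b d then nk n d q else nk n d (q - 1)) with (nk n d X)
      by (unfold X; destruct (Bool.eqb b d); reflexivity). apply upd_nk; lia. }
  assert (Hocc : forall j, j < n -> occ' (move n d 0 j) = if j =? q then true else occ (move n d 0 j)).
  { intros j Hj. apply upd_occ; lia. }
  split; [|split].
  - unfold Inv. refine (conj _ (conj _ (conj _ (conj _ (conj _ (conj _ _)))))).
    + lia.
    + rewrite Hocc by lia. destruct (0 =? q); auto.
    + rewrite Hocc by lia. rewrite Nat.eqb_refl; auto.
    + intros j Hj. rewrite Hocc by lia. destruct (Nat.eqb_spec j q); try lia. apply I3; lia.
    + rewrite Hnap by lia. unfold X. destruct (Bool.eqb b d).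
      * rewrite Nat.eqb_refl. auto.
      * destruct (Nat.eqb_spec q (q - 1)); try lia. apply I5; lia.
    + intros j Hj. rewrite Hnap by lia. destruct (Nat.eqb_spec j X); try lia. apply I5; lia.
    + intros j Hj Ho. rewrite Hocc in Ho by lia. destruct (Nat.eqb_spec j q); try discriminate.
      destruct (le_lt_dec j p).
      * destruct (I6 j l Ho). split; auto. rewrite Hocc by lia. destruct (S j =? q); auto.
      * split. lia. rewrite Hocc by lia. destruct (Nat.eqb_spec (S j) q); auto.
        destruct prevd; [|lia]. destruct Hq as [_ [_ [Hq _]]]. specialize (Hq eq_refl). lia.
  - rewrite (cnt_add n (emp n d occ) (emp n d occ') (fun j => if j =? q then 1 else 0)).
    rewrite cnt_ind by lia. lia.
    intros j Hj. unfold emp. rewrite Hocc by auto.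
    destruct (Nat.eqb_spec j q). subst j. rewrite I3 by lia. auto. lia.
  - rewrite (cnt_add n (trap n d occ' nap') (trap n d occ nap)
       (fun j => if j =? p + 1 then (if prevd && negb (Bool.eqb b d) then 1 else 0) else 0)).
    rewrite cnt_indc by lia. lia.
    intros j Hj. unfold trap. rewrite Hocc by auto.
    destruct (Nat.eqb_spec j q).
    { subst j. rewrite I3 by lia. rewrite (I5 q) by lia. simpl.
      destruct (Nat.eqb_spec q (p + 1)); auto. destruct prevd; simpl; auto.
      destruct Hq as [_ [_ [Hq _]]]. specialize (Hq eq_refl). lia. }
    destruct (occ (move n d 0 j)) eqn:Eo.
    { destruct (Nat.eqb_spec j (p + 1)); auto. destruct prevd; simpl; auto.
      rewrite I3 in Eo by lia. discriminate. }
    rewrite !Hnap by lia.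
    destruct (le_lt_dec j p).
    + assert (j <> p) by (intro; subst j; congruence).
      replace (j =? X) with false by (symmetry; apply Nat.eqb_neq; lia).
      replace (j - 1 =? X) with false by (symmetry; apply Nat.eqb_neq; lia).
      replace (j =? p + 1) with false by (symmetry; apply Nat.eqb_neq; lia). lia.
    + destruct (Nat.eqb_spec j (p + 1)).
      * subst j. replace (p + 1 - 1) with p by lia. rewrite I4, (I5 (p+1)) by lia.
        destruct prevd.
        -- destruct Hq as [_ [_ [Hq _]]]. specialize (Hq eq_refl).
           destruct (Nat.eqb_spec (p + 1) X); destruct (Nat.eqb_spec p X); unfold X in *;
           destruct (Bool.eqb b d); simpl; lia.
        -- destruct Hq as [_ [_ [_ Hq]]]. specialize (Hq eq_refl). lia.
      * assert (j > q) by (destruct prevd; destruct Hq as [_ [_ [Hq1 Hq2]]];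
                 [specialize (Hq1 eq_refl)|specialize (Hq2 eq_refl)]; lia).
        destruct (Nat.eqb_spec j X); try lia. rewrite (I5 j) by lia. simpl. lia.
Qed.

Lemma GA_SS r : GA (S (S r)) = ((1 + GB r + GA r) / 2)%R. Proof. reflexivity. Qed.
Lemma GB_SS r : GB (S (S r)) = ((GA (S r) + GB (S r)) / 2)%R. Proof. reflexivity. Qed.

Lemma P_end n d : 0 < n -> forall k occ nap p prevd, Inv n d occ nap p prevd -> k = cnt n (emp n d occ) ->
  n <= p + 2 ->
  SL (all_prefs k) (fun s => INR (runW n d occ nap (move n d 0 p) prevd false s)) =
  (2 ^ k * (INR (cnt n (trap n d occ nap)) + G prevd (n - 1 - p)))%R.
Proof.
  intros Hn k occ nap p prevd HI Hk Hend.
  destruct HI as [I0 [I1 [I2 [I3 [I4 [I5 I6]]]]]].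
  assert (HG : G prevd (n - 1 - p) = 0%R).
  { assert (n - 1 - p = 0 \/ n - 1 - p = 1) as [-> | ->] by lia; destruct prevd; reflexivity. }
  rewrite HG, Rplus_0_r, <- SL_const. apply SL_ext. intros s Hs. f_equal.
  apply all_prefs_len in Hs.
  assert (Hiso : forall j, j < n -> occ (move n d 0 j) = false -> 1 <= j /\ (S j < n -> occ (move n d 0 (S j)) = true)).
  { intros j Hj Ho. destruct (le_lt_dec j p).
    - destruct (I6 j l Ho); auto.
    - split. lia. intros; lia. }
  pose proof (proj1 (seat0 n d Hn)) as H00.
  destruct s as [|b s].
  - apply (W4 n d Hn [] occ nap (move n d 0 p) prevd Hiso). simpl in *; lia.
  - rewrite runW_sw.
    + apply W4; auto. lia.
    + rewrite H00 in I1.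
      destruct (Nat.eq_dec (p + 1) n).
      * rewrite (mv_wrap n d p 1) by lia. rewrite I1. reflexivity.
      * rewrite (mv_wrap n d p 2) by lia. rewrite I1. apply andb_false_r.
Qed.

Lemma P1 n d : 0 < n -> forall k occ nap p prevd, Inv n d occ nap p prevd -> k = cnt n (emp n d occ) ->
  SL (all_prefs k) (fun s => INR (runW n d occ nap (move n d 0 p) prevd false s)) =
  (2 ^ k * (INR (cnt n (trap n d occ nap)) + G prevd (n - 1 - p)))%R.
Proof.
  intros Hn k. induction k as [|k IH]; intros occ nap p prevd HI Hk;
    (destruct (le_lt_dec n (p + 2)) as [Hend|Hgo]; [apply P_end; auto|]).
  - exfalso. destruct HI as [I0 [I1 [I2 [I3 [I4 [I5 I6]]]]]].
    assert (cnt n (fun j => if j =? p + 1 then 1 else 0) <= cnt n (emp n d occ)).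
    { apply cnt_le. intros j Hj. unfold emp. destruct (Nat.eqb_spec j (p+1)); [|lia].
      subst. rewrite I3 by lia. auto. }
    rewrite cnt_ind in H by lia. lia.
  - rewrite SL_S. rewrite (SL_ext _ _ (fun l =>
       (INR (runW n d (upd occ (move n d 0 (if prevd then p + 2 else p + 1)))
         (upd nap (if Bool.eqb true d then nk n d (if prevd then p + 2 else p + 1) else nk n d ((if prevd then p + 2 else p + 1) - 1)))
         (move n d 0 (if prevd then p + 2 else p + 1)) (Bool.eqb true d) false l) +
        INR (runW n d (upd occ (move n d 0 (if prevd then p + 2 else p + 1)))
         (upd nap (if Bool.eqb false d then nk n d (if prevd then p + 2 else p + 1) else nk n d ((if prevd then p + 2 else p + 1) - 1)))
         (move n d 0 (if prevd then p + 2 else p + 1)) (Bool.eqb false d) false l))%R)).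
    2:{ intros l _. rewrite !runW_step by auto. reflexivity. }
    rewrite SL_plus.
    destruct (step_facts n d occ nap p prevd true Hn HI Hgo) as [J1 [J2 J3]].
    destruct (step_facts n d occ nap p prevd false Hn HI Hgo) as [K1 [K2 K3]].
    rewrite (IH _ _ _ _ J1) by lia. rewrite (IH _ _ _ _ K1) by lia.
    rewrite J3, K3.
    assert (HK : k = cnt n (emp n d occ) - 1) by lia.
    destruct prevd.
    + replace (n - 1 - p) with (S (S (n - 1 - (p + 2)))) by lia. rewrite GA_SS. simpl G.
      destruct d; simpl; rewrite !plus_INR; simpl; field.
    + replace (n - 1 - p) with (S (S (n - 1 - (p + 2)))) by lia. rewrite GB_SS. simpl G.
      replace (S (n - 1 - (p + 2))) with (n - 1 - (p + 1)) by lia.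
      destruct d; simpl; rewrite ?plus_INR; simpl; field.
Qed.

Lemma nuW_eq n b l : 0 < n -> nuW n (b :: l) =
  runW n b (upd (fun _ => false) (move n b 0 0)) (upd (fun _ => false) (nk n b 0)) (move n b 0 0) true false l.
Proof.
  intros Hn. destruct (seat0 n b Hn) as [H1 [H2 H3]].
  unfold nuW, take_napkin. rewrite H1.
  destruct b; simpl in *; [reflexivity| rewrite H2; reflexivity].
Qed.

Lemma cnt_one n : cnt n (fun _ => 1) = n.
Proof. induction n; simpl; lia. Qed.

Lemma EW_GA m : EW (S m) = GA m.
Proof.
  set (n := S m). assert (Hn : 0 < n) by (unfold n; lia).
  unfold EW. change (fold_right Rplus 0%R (map (fun s => INR (nuW n s)) (all_prefs n))) with
    (SL (all_prefs n) (fun s => INR (nuW n s))).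
  unfold n at 1. rewrite SL_S.
  pose proof (proj1 (seat0 n true Hn)) as T0. pose proof (proj1 (seat0 n false Hn)) as F0.
  assert (HI : forall b, Inv n b (upd (fun _ => false) (move n b 0 0)) (upd (fun _ => false) (nk n b 0)) 0 true).
  { intros b. unfold Inv. refine (conj Hn (conj _ (conj _ (conj _ (conj _ (conj _ _)))))).
    - unfold upd. rewrite Nat.eqb_refl. auto.
    - unfold upd. rewrite Nat.eqb_refl. auto.
    - intros j Hj. rewrite upd_occ by lia. destruct (Nat.eqb_spec j 0); auto. lia.
    - unfold upd. rewrite Nat.eqb_refl. auto.
    - intros j Hj. rewrite upd_nk by lia. destruct (Nat.eqb_spec j 0); auto. lia.
    - intros j Hj Ho. assert (j = 0) by lia. subst. unfold upd in Ho. rewrite Nat.eqb_refl in Ho. discriminate. }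
  assert (HE : forall b, m = cnt n (emp n b (upd (fun _ => false) (move n b 0 0)))).
  { intros b. assert (cnt n (fun _ => 1) = cnt n (emp n b (upd (fun _ => false) (move n b 0 0))) + cnt n (fun j => if j =? 0 then 1 else 0)).
    { apply cnt_add. intros j Hj. unfold emp. rewrite upd_occ by lia. destruct (j =? 0); auto. }
    rewrite cnt_one, cnt_ind in H by lia. assert (Hnm : n = S m) by reflexivity. lia. }
  assert (HT : forall b, cnt n (trap n b (upd (fun _ => false) (move n b 0 0)) (upd (fun _ => false) (nk n b 0))) = 0).
  { intros b. transitivity (cnt n (fun _ => 0)); [|clear; induction n; simpl; lia].
    apply cnt_ext. intros j Hj. unfold trap. rewrite upd_occ by lia. destruct (Nat.eqb_spec j 0); auto.
    rewrite upd_nk by lia. destruct (Nat.eqb_spec j 0); try lia. reflexivity. }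
  rewrite (SL_ext _ _ (fun l => (INR (runW n true (upd (fun _ => false) (move n true 0 0)) (upd (fun _ => false) (nk n true 0)) (move n true 0 0) true false l)
        + INR (runW n false (upd (fun _ => false) (move n false 0 0)) (upd (fun _ => false) (nk n false 0)) (move n false 0 0) true false l))%R)).
  2:{ intros l _. rewrite !nuW_eq by lia. reflexivity. }
  rewrite SL_plus. rewrite !(P1 n _ Hn m _ _ 0 true (HI _) (HE _)).
  rewrite !HT. simpl G. replace (n - 1 - 0) with m by (unfold n; lia).
  unfold n. simpl pow. replace (m - 0 - 0) with m by lia. simpl INR. field. apply pow_nonzero. lra.
Qed.

Open Scope R_scope.

Lemma GA_closed r : GA (S r) = (3 * INR (S r) + 1) / 18 + 4 / 9 * (-1/2) ^ (S r) /\
                    GB (S r) = (3 * INR (S r) - 5) / 18 - 2 / 9 * (-1/2) ^ (S r) /\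
                    GA (S (S r)) = (3 * INR (S (S r)) + 1) / 18 + 4 / 9 * (-1/2) ^ (S (S r)) /\
                    GB (S (S r)) = (3 * INR (S (S r)) - 5) / 18 - 2 / 9 * (-1/2) ^ (S (S r)).
Proof.
  induction r as [|r IH].
  - simpl. repeat split; field.
  - destruct IH as [A1 [B1 [A2 B2]]]. split; [exact A2|]. split; [exact B2|].
    rewrite GA_SS, GB_SS, A1, B1, A2, B2. rewrite !S_INR. simpl pow. split; field.
Qed.

Lemma EW0 : EW 0 = 0.
Proof. unfold EW. simpl. field. Qed.

Lemma EW_closed n : (2 <= n)%nat -> EW n = (3 * INR n - 2) / 18 - 8 / 9 * (-1/2) ^ n.
Proof.
  intros H. destruct n as [|[|r]]; try lia. rewrite EW_GA. destruct (GA_closed r) as [A _].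
  rewrite A. rewrite !S_INR. simpl pow. field.
Qed.
Open Scope R_scope.

Lemma isR_plus (a b : nat -> R) (la lb : R) : is_series a la -> is_series b lb -> is_series (fun n => a n + b n) (la + lb).
Proof. intros Ha Hb. exact (is_series_plus a b la lb Ha Hb). Qed.

Lemma isR_scal (c : R) (a : nat -> R) (la : R) : is_series a la -> is_series (fun n => c * a n) (c * la).
Proof. intros Ha. exact (is_series_scal c a la Ha). Qed.

Lemma isR_ext (a b : nat -> R) (l : R) : (forall n, a n = b n) -> is_series a l -> is_series b l.
Proof. apply is_series_ext. Qed.

Lemma is_zero z : Rabs z < 1 -> is_series (fun _ => 0) 0.
Proof.
  intros H. pose proof (isR_scal 0 _ _ (is_series_geom z H)). rewrite Rmult_0_l in H0.
  eapply isR_ext; [|exact H0]. intros; simpl; ring.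
Qed.

Lemma is_corr z : Rabs z < 1 -> is_series (fun n => match n with 0%nat => 1 | 1%nat => - z / 2 | _ => 0 end) (1 - z / 2).
Proof.
  intros H. apply is_series_decr_1.
  match goal with |- is_series _ ?L => assert (E1 : L = - z / 2) by (cbn; field); rewrite E1 end.
  apply is_series_decr_1.
  match goal with |- is_series _ ?L => assert (E2 : L = 0) by (cbn; field); rewrite E2 end.
  eapply isR_ext; [|exact (is_zero z H)]. intros; reflexivity.
Qed.

Lemma is_lin z : Rabs z < 1 -> is_series (fun n => INR (S n) * z ^ n) (/ (1 - z) * / (1 - z)).
Proof.
  intros H. assert (Hex : ex_series (fun n => Rabs (z ^ n))).
  { exists (/ (1 - Rabs z)). eapply isR_ext; [|apply is_series_geom; rewrite Rabs_Rabsolu; exact H].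
    intros n; apply RPow_abs. }
  pose proof (is_series_mult _ _ _ _ (is_series_geom z H) (is_series_geom z H) Hex Hex) as M.
  eapply isR_ext; [|exact M]. intros n. cbv beta.
  rewrite (sum_eq _ (fun _ => z ^ n)). rewrite sum_cte. ring.
  intros i Hi. rewrite <- pow_add. f_equal. lia.
Qed.

Lemma EW_small n : (n < 2)%nat -> EW n = 0.
Proof.
  intros H. destruct n as [|[|]]; try lia. apply EW0. rewrite EW_GA. reflexivity.
Qed.

Theorem proposition4 :
  (forall z : R, Rabs z < 1 ->
     is_series (fun n : nat => EW n * z ^ n)
               (z ^ 3 * (2 - z) / (2 * (1 - z) ^ 2 * (2 + z))))
  /\
  (forall n : nat,
     EW (n + 3) =
       ((3 * INR n + 7) * powerRZ 2 (Z.of_nat n - 1) + (-1) ^ n) / (9 * 2 ^ n)).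
Proof.
  split.
  - intros z Hz.
    assert (Hz2 : Rabs (-1/2 * z) < 1).
    { rewrite Rabs_mult. replace (Rabs (-1/2)) with (1/2). 2:{ rewrite Rabs_left by lra. field. }
      pose proof (Rabs_pos z). lra. }
    pose proof (isR_plus _ _ _ _ (isR_plus _ _ _ _ (isR_scal (1/6) _ _ (is_lin z Hz)) (isR_scal (-5/18) _ _ (is_series_geom z Hz)))
                 (isR_plus _ _ _ _ (isR_scal (-8/9) _ _ (is_series_geom _ Hz2)) (is_corr z Hz))) as HS.
    assert (Hz1 : 1 - z <> 0) by (intro; apply Rabs_def2 in Hz; lra).
    assert (Hz3 : 2 + z <> 0) by (intro; apply Rabs_def2 in Hz; lra).
    assert (Hz4 : 1 - -1/2 * z <> 0) by (intro; apply Rabs_def2 in Hz; lra).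
    match goal with |- is_series _ ?L => replace L with
      (1 / 6 * (/ (1 - z) * / (1 - z)) + -5/18 * / (1 - z) + (-8/9 * / (1 - -1/2 * z) + (1 - z / 2))) end.
    2:{ field. auto. }
    eapply isR_ext; [|exact HS]. intros n. cbv beta.
    destruct (le_lt_dec 2 n) as [Hn|Hn].
    + rewrite EW_closed by auto. destruct n as [|[|n]]; try lia. rewrite Rpow_mult_distr.
      rewrite !S_INR. set (A := z ^ Datatypes.S (Datatypes.S n)). set (B := (-1/2) ^ Datatypes.S (Datatypes.S n)). field.
    + rewrite EW_small by auto. destruct n as [|[|n]]; try lia; simpl; field.
  - intros n. rewrite EW_closed by lia.
    replace (Z.of_nat n - 1)%Z with (Z.of_nat n + (-1))%Z by lia. rewrite powerRZ_add by lra. rewrite <- pow_powerRZ. simpl powerRZ.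
    replace (-1/2) with (-1 * / 2) by field. rewrite Rpow_mult_distr, pow_inv.
    rewrite plus_INR. simpl INR. rewrite !pow_add. simpl pow. field. apply pow_nonzero. lra.
Qed.
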